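(* Let $\mathcal{C}$ be an $[n,k,d]_q$ linear code with two $(r_i,\delta_i)_{i\in\{1,2\}}$ localities with respect to the sets $\mathcal{T}_1$, $\mathcal{T}_2=[n]\setminus\mathcal{T}_1$, where $n_i=|\mathcal{T}_i|$, $r_1\le r_2$ and $\delta_1\ge\delta_2\ge 2$. Put $\Delta=\lceil n_1/(r_1+\delta_1-1)\rceil(\delta_1-1)$. Suppose that $r_1\lceil n_1/(r_1+\delta_1-1)\rceil\le k-1$ and $r_1\lceil(\Delta-1)/(\delta_1-1)\rceil+(\Delta-1)<n_1$. Then $$\Phi(x)\le r_1\left\lceil\frac{x}{\delta_1-1}\right\rceil+x \quad\text{for } 0\le x\le\Delta,$$ and $$\Phi(x)\le r_1\left\lceil\frac{n_1}{r_1+\delta_1-1}\right\rceil+r_2\left\lceil\frac{x-\Delta}{\delta_2-1}\right\rceil+x\quad\text{for } \Delta\le x\le\rho+1,$$ where $\rho=\max\{x:\Phi(x)-x<k\}$.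
   Context: $[n]=\{1,\dots,n\}$. For an $[n,k,d]_q$ linear code $\mathcal{C}$ with generator matrix $G$ whose columns are $\vec g_1,\dots,\vec g_n$, a regenerating set of coordinate $i$ is a subset $R\subseteq[n]$ with $i\in R$ such that $\vec g_i$ is an $\mathbb{F}_q$-linear combination of $\{\vec g_j\}_{j\in R\setminus\{i\}}$; regenerating sets are always taken to be minimal (no proper subset $R'\subsetneq R\setminus\{i\}$ has $\vec g_i$ in the span of $\{\vec g_j\}_{j\in R'}$). $\mathcal{R}_i$ denotes the collection of all regenerating sets of coordinate $i$. A sequence $R_1,\dots,R_m$ with $R_t\in\mathcal{R}_{l_t}$, $l_t\in[n]$, has a nontrivial union if $l_j\notin\bigcup_{t=1}^{j-1}R_t$ for all $1\le j\le m$. Define $\Phi(0)=0$ and, for $x\ge1$, $\Phi(x)=\min\{|\bigcup_{t=1}^xR_t| : R_t\in\mathcal{R}_{l_t},\ R_1,\dots,R_x\text{ have a nontrivial union}\}$. Two $(r_i,\delta_i)_{i\in\{1,2\}}$ localities: $\mathcal{T}_1\subseteq[n]$, $\mathcal{T}_2=[n]\setminus\mathcal{T}_1$, $r_1\le r_2$, $\delta_1\ge\delta_2\ge2$ integers, and for $i=1,2$ and each $\iota\in\mathcal{T}_i$ there is $S_\iota\subseteq\mathcal{T}_i$ with $\iota\in S_\iota$, $\delta_i\le|S_\iota|\le r_i+\delta_i-1$, such that for every $E\subseteq S_\iota$ with $|E|=\delta_i-1$ and every $j\in E$, $(S_\iota\setminus E)\cup\{j\}\in\mathcal{R}_j$.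 *)

(* Defs.v *)
From HB Require Import structures.
From mathcomp Require Import all_boot all_order all_algebra.
Set Implicit Arguments. Unset Strict Implicit. Unset Printing Implicit Defensive.
Import GRing.Theory Num.Theory.

Section Codes.
Variables (F : finFieldType) (k n : nat).
Implicit Types (G : 'M[F]_(k, n)).

Definition wt (v : 'rV[F]_n) : nat := #|[set j : 'I_n | v ord0 j != 0%R]|.

Definition is_min_dist G (d : nat) : Prop :=
  (exists2 u : 'rV[F]_k, (u != 0)%R & wt (u *m G) = d) /\
  (forall u : 'rV[F]_k, (u != 0)%R -> d <= wt (u *m G)).

Definition in_span G (S : {set 'I_n}) (i : 'I_n) : bool :=
  [exists c : {ffun 'I_n -> F}, col i G == (\sum_(j in S) c j *: col j G)%R].

Definition regen G (i : 'I_n) (R : {set 'I_n}) : bool :=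
  [&& i \in R, in_span G (R :\ i) i &
      [forall R' : {set 'I_n}, (R' \proper (R :\ i)) ==> ~~ in_span G R' i]].

Definition nontriv_union G (x : nat) (t : x.-tuple ('I_n * {set 'I_n})) : bool :=
  [forall j : 'I_x, regen G (tnth t j).1 (tnth t j).2 &&
     ((tnth t j).1 \notin \bigcup_(s : 'I_x | s < j) (tnth t s).2)].

Definition union_of (x : nat) (t : x.-tuple ('I_n * {set 'I_n})) : {set 'I_n} :=
  \bigcup_(s : 'I_x) (tnth t s).2.

(* Phi(x) as an extended natural: None = +oo (min over an empty family) *)
Definition Phi G (x : nat) : option nat :=
  if [pick t : x.-tuple ('I_n * {set 'I_n}) | nontriv_union G t] is Some t0 then
    Some #|union_of [arg min_(t < t0 | nontriv_union G t) #|union_of t|]|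
  else None.

Definition locality G (T : {set 'I_n}) (r delta : nat) : Prop :=
  forall iota, iota \in T -> exists S : {set 'I_n},
    [/\ S \subset T, iota \in S, delta <= #|S|, #|S| <= r + delta - 1 &
        forall E : {set 'I_n}, E \subset S -> #|E| = delta - 1 ->
          forall j, j \in E -> regen G j ((S :\: E) :|: [set j])].

End Codes.

Definition ceiln (a b : nat) : nat := (a + b.-1) %/ b.
Definition ceilz (a b : int) : int := (- ((- a) %/ b)%Z)%R.

(* Main.v *)
Require Import Defs.
From HB Require Import structures.
From mathcomp Require Import all_boot all_order all_algebra.
From mathcomp Require Import zify.
Import GRing.Theory Num.Theory.
Set Implicit Arguments. Unset Strict Implicit. Unset Printing Implicit Defensive.

Section Aux.
Variables (F : finFieldType) (k n : nat) (G : 'M[F]_(k, n)).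
Notation P := ('I_n * {set 'I_n})%type.

Fixpoint nuR (acc : {set 'I_n}) (s : seq P) : Prop :=
  match s with
  | [::] => True
  | p :: s' => [/\ regen G p.1 p.2, p.1 \notin acc & nuR (acc :|: p.2) s']
  end.

Definition unionS (s : seq P) : {set 'I_n} := \bigcup_(p <- s) p.2.

Lemma unionS_nil : unionS [::] = set0.
Proof. by rewrite /unionS big_nil. Qed.

Lemma unionS_cons p s : unionS (p :: s) = p.2 :|: unionS s.
Proof. by rewrite /unionS big_cons. Qed.

Lemma unionS_rcons s p : unionS (rcons s p) = unionS s :|: p.2.
Proof. by rewrite /unionS -cats1 big_cat big_seq1. Qed.

Lemma nuR_rcons acc s p : nuR acc s -> regen G p.1 p.2 ->
  p.1 \notin acc :|: unionS s -> nuR acc (rcons s p).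
Proof.
elim: s acc => [|q s IH] acc /=.
  by move=> _ Hr; rewrite unionS_nil setU0.
move=> [H1 H2 H3] Hr Hn; split => //; apply: IH => //.
by rewrite unionS_cons setUA in Hn.
Qed.

Lemma nuR_cat acc s1 s2 : nuR acc (s1 ++ s2) -> nuR acc s1.
Proof.
elim: s1 acc => [|q s IH] acc //=.
by move=> [H1 H2 H3]; split => //; apply: IH.
Qed.

Lemma nuR_notin acc s q : nuR acc s -> q \in s -> q.1 \notin acc.
Proof.
elim: s acc => [|p s IH] acc //=.
move=> [H1 H2 H3]; rewrite inE => /orP [/eqP -> //|Hq].
have := IH _ H3 Hq; rewrite in_setU negb_or => /andP [] //.
Qed.

Lemma regen_in i R : regen G i R -> i \in R.
Proof. by case/and3P. Qed.

Lemma nuR_nth d acc s : nuR acc s <->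
  (forall j, j < size s -> regen G (nth d s j).1 (nth d s j).2 /\
     (nth d s j).1 \notin acc :|: \bigcup_(0 <= i < j) (nth d s i).2).
Proof.
elim: s acc => [|p s IH] acc /=; first by split.
split.
  move=> [Hr Hn Hs] [|j] Hj /=.
    by rewrite big_geq // setU0.
  have := (IH (acc :|: p.2)).1 Hs j Hj.
  by rewrite big_nat_recl //= setUA.
move=> H.
have [Hr Hn] := H 0 erefl.
rewrite big_geq // setU0 in Hn.
split => //; apply/IH => j Hj.
have := H j.+1 Hj.
by rewrite big_nat_recl //= setUA.
Qed.

Lemma union_ofE x (t : x.-tuple P) : union_of t = unionS t.
Proof. by rewrite /union_of /unionS big_tuple. Qed.

Lemma nu_tuple x (t : x.-tuple P) : nontriv_union G t <-> nuR set0 t.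
Proof.
case: x t => [|x] t.
  by rewrite tuple0 /=; split => // _; apply/forallP => -[].
set d := tnth t ord0.
have Hb : forall j : 'I_x.+1, \bigcup_(s : 'I_x.+1 | s < j) (tnth t s).2 =
    \bigcup_(0 <= i < j) (nth d t i).2.
  move=> j; rewrite (big_nat_widen 0 j x.+1); last exact: ltnW.
  rewrite big_mkord; apply: eq_big => [i|i _] //.
  by rewrite (tnth_nth d).
rewrite (nuR_nth d); split.
  move=> /forallP H j Hj.
  have Hj' : j < x.+1 by rewrite size_tuple in Hj.
  have := H (Ordinal Hj'); rewrite Hb (tnth_nth d) /= set0U.
  by case/andP.
move=> H; apply/forallP => j.
have Hj : j < size t by rewrite size_tuple.
have [Hr Hn] := H j Hj.
by rewrite Hb (tnth_nth d) Hr; rewrite set0U in Hn.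
Qed.

Lemma Phi_some s : nuR set0 s ->
  exists2 p, Phi G (size s) = Some p & p <= #|unionS s|.
Proof.
move=> Hs.
have Ht : nontriv_union G (in_tuple s) by apply/nu_tuple.
rewrite /Phi; case: pickP => [t0 Ht0|/(_ (in_tuple s))]; last by rewrite Ht.
case: arg_minnP => // t1 Ht1 Hmin.
eexists; first reflexivity.
by have := Hmin _ Ht; rewrite !union_ofE.
Qed.

Lemma Phi_inv x p : Phi G x = Some p ->
  exists s, [/\ size s = x, nuR set0 s & #|unionS s| = p].
Proof.
rewrite /Phi; case: pickP => [t0 Ht0|] //.
case: arg_minnP => // t1 Ht1 Hmin [<-].
exists (val t1); split; first exact: size_tuple.
  by apply/nu_tuple.
by rewrite union_ofE.
Qed.

Lemma Phi_le x p : Phi G x = Some p -> p <= n.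
Proof.
move/Phi_inv => [s [_ _ <-]].
by apply: leq_trans (max_card _) _; rewrite card_ord.
Qed.



Definition Mof (S : {set 'I_n}) : 'M[F]_(#|S|, k) :=
  rowsub (fun i : 'I_#|S| => enum_val i) G^T.

Lemma row_Mof (S : {set 'I_n}) j : j \in S -> (row j G^T <= Mof S)%MS.
Proof.
move=> Hj.
by rewrite -(enum_rankK_in Hj Hj) -row_rowsub row_sub.
Qed.

Lemma span_sub m' (M : 'M[F]_(m', k)) i R : in_span G R i ->
  (forall j, j \in R -> (row j G^T <= M)%MS) -> (row i G^T <= M)%MS.
Proof.
move=> /existsP [c /eqP Hc] H.
rewrite -tr_col Hc raddf_sum /=.
apply: summx_sub => j Hj.
rewrite linearZ /= tr_col.
exact: scalemx_sub (H j Hj).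
Qed.

Lemma good_all acc s m' (M : 'M[F]_(m', k)) : nuR acc s ->
  (forall i, i \notin [seq p.1 | p <- s] -> (row i G^T <= M)%MS) ->
  forall i, (row i G^T <= M)%MS.
Proof.
elim: s acc => [|p s IH] acc /=; first by move=> _ H i; apply: H.
move=> [Hr Hn Hs] H; apply: (IH _ Hs) => i Hi.
case: (eqVneq i p.1) => [->|Hne]; last first.
  by apply: H; rewrite inE negb_or Hne.
case/and3P: Hr => _ Hsp _.
apply: span_sub Hsp _ => j; rewrite in_setD1 => /andP [Hjne Hj].
apply: H; rewrite inE negb_or Hjne /=.
apply/mapP => -[q Hq Hjq].
have := nuR_notin Hs Hq; rewrite -Hjq in_setU Hj orbT //.
Qed.

Lemma uniq_fst acc s : nuR acc s -> uniq [seq p.1 | p <- s].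
Proof.
elim: s acc => [|p s IH] acc //=.
move=> [Hr Hn Hs]; rewrite (IH _ Hs) andbT.
apply/mapP => -[q Hq Heq].
have := nuR_notin Hs Hq; rewrite -Heq in_setU (regen_in Hr) orbT //.
Qed.

Lemma rank_bound s : nuR set0 s -> \rank G = k -> k + size s <= n.
Proof.
move=> Hs Hk.
set L := [set i in [seq p.1 | p <- s]].
have HL : #|L| = size s.
  by rewrite cardsE (card_uniqP (uniq_fst Hs)) size_map.
have HS : #|~: L| = n - size s.
  by have := cardsC L; rewrite card_ord HL; lia.
have Hall := good_all (M:=Mof (~: L)) Hs.
have Hsub : ((G^T)%R <= Mof (~: L))%MS.
  apply/row_subP => i; apply: Hall => j Hj.
  by apply: row_Mof; rewrite in_setC inE.
have := mxrankS Hsub; rewrite mxrank_tr Hk => H1.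
have H2 : \rank (Mof (~: L)) <= n - size s.
  by rewrite -HS; exact: rank_leq_row.
have : size s <= n.
  by rewrite -HL; apply: leq_trans (max_card _) _; rewrite card_ord.
lia.
Qed.



Lemma ex_card_between (T : finType) (A B : {set T}) c :
  A \subset B -> #|A| <= c <= #|B| ->
  exists E : {set T}, [/\ A \subset E, E \subset B & #|E| = c].
Proof.
elim: c A => [|c IH] A HAB /andP [Hc HcB].
  exists set0; have /eqP -> : A == set0 by rewrite -cards_eq0; lia.
  by split; rewrite ?sub0set ?cards0.
case: (ltnP #|A| c.+1) => Hl.
  have [E [HAE HEB HE]] := IH A HAB (introT andP (conj Hl (ltnW HcB))).
  case: (set_0Vmem (B :\: E)) => [H0|[b Hb]].
    have : B \subset E by rewrite -setD_eq0 H0.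
    move/subset_leq_card; lia.
  move: Hb; rewrite in_setD => /andP [HbE HbB].
  exists (b |: E); split.
  - exact: subset_trans HAE (subsetUr _ _).
  - by rewrite subUset sub1set HbB HEB.
  - by rewrite cardsU1 HbE HE.
exists A; split => //; lia.
Qed.

Lemma LG (T : {set 'I_n}) r delta (U : {set 'I_n}) iota : locality G T r delta -> 2 <= delta ->
  iota \in T -> iota \notin U ->
  exists S E : {set 'I_n}, [/\ S \subset T, E \subset S /\ iota \in E,
     #|E| = delta - 1 /\ #|S| <= r + delta - 1,
     (forall j, j \in E -> regen G j ((S :\: E) :|: [set j])) &
     (E \subset ~: U \/ S :\: U \subset E)].
Proof.
move=> Hloc Hd HT HU.
have [S [HST HiS HdS HSr Hreg]] := Hloc iota HT.
case: (leqP (delta - 1) #|S :\: U|) => Hc.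
  have Hsub : [set iota] \subset S :\: U by rewrite sub1set in_setD HU HiS.
  have H1d : #|[set iota]| <= delta - 1 by rewrite cards1; lia.
  have [E [H1 H2 H3]] := ex_card_between Hsub (introT andP (conj H1d Hc)).
  have HES : E \subset S by exact: subset_trans H2 (subsetDl _ _).
  have HR : forall j, j \in E -> regen G j ((S :\: E) :|: [set j]).
    by move=> j Hj; exact: (Hreg E HES H3 j Hj).
  have HiE : iota \in E by rewrite -sub1set.
  have HEU : E \subset ~: U.
    apply: subset_trans H2 _; apply/subsetP => z; rewrite in_setD in_setC.
    by case/andP.
  by exists S, E; split; [done | by split | by split | done | left].
have Hsub : S :\: U \subset S by exact: subsetDl.
have [E [H1 H2 H3]] := ex_card_between Hsub
    (introT andP (conj (ltnW Hc) (ltac:(lia) : delta - 1 <= #|S|))).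
have HiE : iota \in E by apply: (subsetP H1); rewrite in_setD HU HiS.
have HR : forall j, j \in E -> regen G j ((S :\: E) :|: [set j]).
  by move=> j Hj; exact: (Hreg E H2 H3 j Hj).
by exists S, E; split; [done | by split | by split | done | right].
Qed.

Record Inv (Dom : {set 'I_n}) (x0 C0 r m : nat) (s : seq P)
    (Fr : {set 'I_n}) (g : nat) : Prop := {
  i_nu : nuR set0 s;
  i_dom : unionS s \subset Dom;
  i_frdom : Fr \subset Dom;
  i_disj : [disjoint Fr & unionS s];
  i_free : forall j, j \in Fr ->
    exists R, regen G j R /\ R \subset unionS s :|: [set j];
  i_cost : #|unionS s| <= size s + C0 + r * g;
  i_cnt : g * m <= size s - x0 + minn #|Fr| m.-1;
  i_x0 : x0 <= size s }.

Lemma Inv0 Dom r m : Inv Dom 0 0 r m [::] set0 0.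
Proof.
split => //=; rewrite ?unionS_nil ?sub0set //.
  by rewrite -setI_eq0 set0I.
  by move=> j; rewrite inE.
by rewrite cards0.
Qed.



Lemma card_setU_le (A B : {set 'I_n}) : #|A :|: B| <= #|A| + #|B|.
Proof. by rewrite cardsU leq_subr. Qed.

Lemma step_free Dom x0 C0 r m s Fr g j : Inv Dom x0 C0 r m s Fr g -> j \in Fr ->
  exists s' Fr', Inv Dom x0 C0 r m s' Fr' g /\ size s' = (size s).+1.
Proof.
move=> [Hnu Hdom Hfd Hdis Hfree Hcost Hcnt Hx0] Hj.
have [R [HR HRs]] := Hfree j Hj.
have HjU : j \notin unionS s by rewrite (disjointFr Hdis Hj).
exists (rcons s (j, R)), (Fr :\ j); split; last by rewrite size_rcons.
have HU' : unionS (rcons s (j,R)) \subset j |: unionS s.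
  apply/subsetP => z; rewrite unionS_rcons in_setU => /orP [Hz|Hz].
    by rewrite in_setU1 Hz orbT.
  have := subsetP HRs z Hz; rewrite !inE.
  by case/orP => ->; rewrite ?orbT.
split.
- by apply: nuR_rcons => //=; rewrite set0U.
- apply: subset_trans HU' _.
  by rewrite subUset sub1set (subsetP Hfd j Hj) Hdom.
- exact: subset_trans (subD1set _ _) Hfd.
- rewrite disjoints_subset; apply/subsetP => z; rewrite in_setD1.
  move=> /andP [Hzj HzF]; rewrite in_setC; apply/negP => Hz.
  have := subsetP HU' z Hz; rewrite in_setU1 (negbTE Hzj) /= => HzU.
  by rewrite (disjointFr Hdis HzF) in HzU.
- move=> j'; rewrite in_setD1 => /andP [_ Hj'].
  have [R' [H1 H2]] := Hfree j' Hj'.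
  exists R'; split => //; apply: subset_trans H2 _.
  by rewrite unionS_rcons; apply: setSU; apply: subsetUl.
- have h : #|unionS (rcons s (j, R))| <= 1 + #|unionS s|.
    by have := subset_leq_card HU'; rewrite cardsU1 HjU.
  rewrite size_rcons; clear -h Hcost; lia.
- have h : #|Fr| = 1 + #|Fr :\ j| by rewrite (cardsD1 j Fr) Hj.
  rewrite size_rcons; clear -h Hcnt Hx0; lia.
- rewrite size_rcons; clear -Hx0; lia.
Qed.

Lemma step_open Dom x0 C0 r m s g iota (S E : {set 'I_n}) r' delta :
  Inv Dom x0 C0 r m s set0 g -> iota \notin unionS s -> S \subset Dom ->
  E \subset S -> iota \in E ->
  #|E| = delta - 1 -> #|S| <= r' + delta - 1 -> r' <= r -> m <= delta - 1 ->
  (forall j, j \in E -> regen G j ((S :\: E) :|: [set j])) ->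
  (E \subset ~: unionS s \/ S :\: unionS s \subset E) ->
  exists s' Fr' g', Inv Dom x0 C0 r m s' Fr' g' /\ size s' = (size s).+1.
Proof.
move=> [Hnu Hdom Hfd Hdis Hfree Hcost Hcnt Hx0] HiU HSD HES HiE HE HS Hr Hm HR Hcase.
rewrite cards0 in Hcnt.
set U := unionS s in HiU Hdom Hdis Hfree Hcost Hcase *.
set R := (S :\: E) :|: [set iota].
set s' := rcons s (iota, R).
have HU' : unionS s' = U :|: R by rewrite unionS_rcons.
set Fr' := (E :\: U) :\ iota.
have Hnu' : nuR set0 s'.
  by apply: nuR_rcons => //=; [exact: HR | rewrite set0U].
have Hdom' : unionS s' \subset Dom.
  rewrite HU' !subUset Hdom (subset_trans (subsetDl _ _) HSD) sub1set.
  by rewrite (subsetP HSD _ (subsetP HES _ HiE)).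
have Hfd' : Fr' \subset Dom.
  apply/subsetP => z; rewrite !in_setD1 in_setD => /andP [_ /andP [_ Hz]].
  exact: subsetP HSD _ (subsetP HES _ Hz).
have Hdis' : [disjoint Fr' & unionS s'].
  rewrite disjoints_subset; apply/subsetP => z.
  rewrite in_setD1 in_setD => /andP [Hzi /andP [HzU HzE]].
  rewrite in_setC HU' /R !in_setU in_setD in_set1 HzE (negbTE HzU) (negbTE Hzi).
  by [].
have Hfree' : forall j, j \in Fr' ->
    exists R0, regen G j R0 /\ R0 \subset unionS s' :|: [set j].
  move=> j; rewrite in_setD1 in_setD => /andP [_ /andP [_ Hj]].
  exists ((S :\: E) :|: [set j]); split; first exact: HR.
  rewrite HU' /R; apply: setSU; apply/subsetP => z Hz.
  by rewrite !in_setU Hz orbT.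
have Hsz : size s' = (size s).+1 by rewrite size_rcons.
case: Hcase => [HEU|HSUE].
- exists s', Fr', g.+1; split => //; split => //.
  + have h1 := card_setU_le U R.
    have h2 : #|R| <= #|S :\: E| + 1.
      by have := card_setU_le (S :\: E) [set iota]; rewrite cards1.
    have h3 : #|S :\: E| = #|S| - #|E| by rewrite cardsD (setIidPr HES).
    rewrite HU' Hsz mulnS; clear -h1 h2 h3 HE HS Hr Hcost; lia.
  + have h1 : E :\ iota \subset Fr'.
      apply/subsetP => z; rewrite !in_setD1 in_setD => /andP [-> HzE].
      by rewrite HzE andbT /=; have := subsetP HEU z HzE; rewrite in_setC.
    have h2 : #|E :\ iota| <= #|Fr'| := subset_leq_card h1.
    have h3 : #|E| = 1 + #|E :\ iota| by rewrite (cardsD1 iota E) HiE.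
    rewrite Hsz mulSn; clear -h2 h3 HE Hm Hcnt Hx0; lia.
  + rewrite Hsz; clear -Hx0; lia.
- exists s', Fr', g; split => //; split => //.
  + have h1 : unionS s' \subset iota |: U.
      apply/subsetP => z; rewrite HU' /R !in_setU in_setD in_set1.
      case/orP => [->|/orP [/andP [HzE HzS]| ->]]; rewrite ?orbT //.
      case: (boolP (z \in U)) => HzU; rewrite ?orbT //.
      have := subsetP HSUE z; rewrite in_setD HzU HzS => /(_ isT).
      by rewrite (negbTE HzE).
    have h : #|unionS s'| <= 1 + #|U|.
      by have := subset_leq_card h1; rewrite cardsU1 HiU.
    rewrite Hsz; clear -h Hcost; lia.
  + rewrite Hsz; clear -Hcnt Hx0; lia.
  + rewrite Hsz; clear -Hx0; lia.
Qed.



Lemma phase1 (T1 : {set 'I_n}) r1 d1 D : locality G T1 r1 d1 -> 2 <= d1 ->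
  (forall x g, x < D -> g * (d1 - 1) <= x -> x + r1 * g < #|T1|) ->
  forall x, x <= D -> exists s Fr g, Inv T1 0 0 r1 (d1 - 1) s Fr g /\ size s = x.
Proof.
move=> Hloc Hd Hroom; elim=> [|x IH] Hx.
  by exists [::], set0, 0; split => //; exact: Inv0.
have [s [Fr [g [HI Hsz]]]] := IH (ltnW Hx).
case: (set_0Vmem Fr) => [HF0|[j Hj]]; last first.
  have [s' [Fr' [HI' Hsz']]] := step_free HI Hj.
  by exists s', Fr', g; rewrite Hsz' Hsz.
subst Fr.
have Hlt : #|unionS s| < #|T1|.
  have Hc := i_cost HI; have Hn := i_cnt HI.
  rewrite cards0 min0n subn0 addn0 Hsz in Hn.
  rewrite addn0 Hsz in Hc.
  have := Hroom x g Hx Hn; lia.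
case: (set_0Vmem (T1 :\: unionS s)) => [H0|[io Hio]].
  have : T1 \subset unionS s by rewrite -setD_eq0 H0.
  move/subset_leq_card; lia.
move: Hio; rewrite in_setD => /andP [HioU HioT].
have [S [E [HST [HES HiE] [HE HS] HR Hcase]]] := LG Hloc Hd HioT HioU.
have [s' [Fr' [g' [HI' Hsz']]]] :=
  step_open HI HioU HST HES HiE HE HS (leqnn r1) (leqnn _) HR Hcase.
by exists s', Fr', g'; rewrite Hsz' Hsz.
Qed.

Lemma phase2 (T1 : {set 'I_n}) r1 r2 d1 d2 D C0 s0 Fr0 g0 :
  locality G T1 r1 d1 -> locality G (~: T1) r2 d2 -> r1 <= r2 -> d2 <= d1 ->
  2 <= d2 -> Inv setT D C0 r2 (d2 - 1) s0 Fr0 g0 -> size s0 = D ->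
  forall y, exists s Fr g, Inv setT D C0 r2 (d2 - 1) s Fr g /\
     (size s = D + y \/ (size s <= D + y /\ unionS s = setT)).
Proof.
move=> Hl1 Hl2 Hr Hd Hd2 HI0 Hs0; elim=> [|y IH].
  by exists s0, Fr0, g0; split => //; left; rewrite addn0.
have [s [Fr [g [HI [Hsz|[Hle Hfull]]]]]] := IH; last first.
  exists s, Fr, g; split => //; right; split => //.
  by rewrite addnS; exact: leqW Hle.
case: (set_0Vmem Fr) => [HF0|[j Hj]]; last first.
  have [s' [Fr' [HI' Hsz']]] := step_free HI Hj.
  by exists s', Fr', g; split => //; left; rewrite Hsz' Hsz addnS.
subst Fr.
case: (set_0Vmem (~: unionS s)) => [H0|[io Hio]].
  exists s, set0, g; split => //; right; split.
    by rewrite Hsz addnS leqnSn.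
  apply/setP => z; rewrite in_setT.
  have : z \notin ~: unionS s by rewrite H0 in_set0.
  by rewrite in_setC negbK.
rewrite in_setC in Hio.
case: (boolP (io \in T1)) => HioT.
  have [S [E [HST [HES HiE] [HE HS] HR Hcase]]] :=
    LG Hl1 (leq_trans Hd2 Hd) HioT Hio.
  have [s' [Fr' [g' [HI' Hsz']]]] :=
    step_open HI Hio (subsetT S) HES HiE HE HS Hr (leq_sub2r 1 Hd) HR Hcase.
  by exists s', Fr', g'; split => //; left; rewrite Hsz' Hsz addnS.
have HioT' : io \in ~: T1 by rewrite in_setC.
have [S [E [HST [HES HiE] [HE HS] HR Hcase]]] := LG Hl2 Hd2 HioT' Hio.
have [s' [Fr' [g' [HI' Hsz']]]] :=
  step_open HI Hio (subsetT S) HES HiE HE HS (leqnn r2) (leqnn _) HR Hcase.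
by exists s', Fr', g'; split => //; left; rewrite Hsz' Hsz addnS.
Qed.

Lemma Inv_g Dom x0 C0 r m s Fr g : 0 < m -> Inv Dom x0 C0 r m s Fr g ->
  g <= ceiln (size s - x0) m.
Proof.
move=> Hm HI; rewrite /ceiln leq_divRL //.
have := i_cnt HI; have := geq_minr #|Fr| m.-1; lia.
Qed.

End Aux.

Lemma ceiln_mono a b c : a <= b -> ceiln a c <= ceiln b c.
Proof. by move=> H; rewrite /ceiln; apply: leq_div2r; rewrite leq_add2r. Qed.

Section Z.
Import Order.TTheory.
Local Open Scope ring_scope.
Lemma ceilz_ge (a b g : nat) : (0 < b)%N -> (g * b <= a)%N ->
  (g%:Z <= ceilz a%:Z b%:Z)%R.
Proof.
move=> Hb Hg; rewrite /ceilz lerNr.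
have Hb' : (0 < b%:Z)%R by rewrite ltz_nat.
rewrite -(ler_pM2r Hb').
apply: le_trans (lez_floor _ _) _; first by rewrite gt_eqF.
by rewrite mulNr lerN2 -PoszM lez_nat.
Qed.
End Z.

Unset Implicit Arguments.
Set Strict Implicit.

Theorem lemma1 (F : finFieldType) (n k d : nat) (G : 'M[F]_(k, n))
  (T1 : {set 'I_n}) (r1 r2 delta1 delta2 rho : nat) :
  \rank G = k ->
  is_min_dist G d ->
  r1 <= r2 -> delta2 <= delta1 -> 2 <= delta2 ->
  locality G T1 r1 delta1 ->
  locality G (~: T1) r2 delta2 ->
  let n1 := #|T1| in
  let Delta := ceiln n1 (r1 + delta1 - 1) * (delta1 - 1) in
  r1 * ceiln n1 (r1 + delta1 - 1) <= k - 1 ->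
  (r1%:Z * ceilz (Delta%:Z - 1) (delta1 - 1)%:Z + (Delta%:Z - 1) < n1%:Z)%R ->
  (* rho = max { x : Phi(x) - x < k } *)
  (exists2 p, Phi G rho = Some p & p - rho < k) ->
  (forall x p, Phi G x = Some p -> p - x < k -> x <= rho) ->
  (forall x, x <= Delta ->
     exists2 p, Phi G x = Some p & p <= r1 * ceiln x (delta1 - 1) + x) /\
  (forall x, Delta <= x <= rho.+1 ->
     exists2 p, Phi G x = Some p &
       p <= r1 * ceiln n1 (r1 + delta1 - 1)
            + r2 * ceiln (x - Delta) (delta2 - 1) + x).
Proof.
move=> Hk _ Hr Hd12 Hd2 Hl1 Hl2 n1 Delta Hk1 Hint Hrho _.
have Hd1 : 2 <= delta1 by exact: leq_trans Hd2 Hd12.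
have Hm1 : 0 < delta1 - 1 by rewrite subn_gt0.
have Hm2 : 0 < delta2 - 1 by rewrite subn_gt0.
set N1 := ceiln n1 (r1 + delta1 - 1) in Delta Hk1 Hint *.
have HDelta : Delta = N1 * (delta1 - 1) by [].
have Hroom : forall x g, x < Delta -> g * (delta1 - 1) <= x -> x + r1 * g < #|T1|.
  move=> x g Hx Hg.
  have HD1 : (Delta%:Z - 1 = (Delta - 1)%:Z)%R by rewrite -subzn //; lia.
  rewrite HD1 in Hint.
  have Hc := ceilz_ge Hm1 (leq_trans Hg (ltac:(lia) : x <= Delta - 1)).
  have Hc' : (r1%:Z * g%:Z <= r1%:Z * ceilz (Delta - 1)%:Z (delta1 - 1)%:Z)%R.
    by apply: ler_wpM2l.
  have Hx' : ((x%:Z) <= (Delta - 1)%:Z)%R by rewrite lez_nat; lia.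
  have : ((r1 * g + x)%:Z < n1%:Z)%R.
    rewrite PoszD PoszM.
    exact: Order.POrderTheory.le_lt_trans (lerD Hc' Hx') Hint.
  by rewrite ltz_nat addnC.
split.
  move=> x Hx.
  have [s [Fr [g [HI Hsz]]]] := phase1 Hl1 Hd1 Hroom Hx.
  have [p Hp Hps] := Phi_some (i_nu HI).
  rewrite Hsz in Hp; exists p => //.
  have Hg := Inv_g Hm1 HI; rewrite Hsz subn0 in Hg.
  have Hc := i_cost HI; rewrite Hsz addn0 in Hc.
  have := leq_mul (leqnn r1) Hg; lia.
have [s0 [Fr0 [g1 [HI1 Hsz1]]]] := phase1 Hl1 Hd1 Hroom (leqnn Delta).
have Hg1 : g1 <= N1.
  have := Inv_g Hm1 HI1; rewrite Hsz1 subn0 => H.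
  apply: leq_trans H _; rewrite /ceiln HDelta divnMDl // divn_small ?addn0 //.
  by rewrite ltn_predL.
have HI2 : Inv G setT Delta (r1 * N1) r2 (delta2 - 1) s0 Fr0 0.
  case: HI1 => H1 H2 H3 H4 H5 H6 H7 H8.
  split; [done|exact: subsetT|exact: subsetT|done|done| |by rewrite mul0n|by rewrite Hsz1].
  have := leq_mul (leqnn r1) Hg1; lia.
move=> x /andP [HDx Hxr].
have [s [Fr [g [HI Hcase]]]] := phase2 Hl1 Hl2 Hr Hd12 Hd2 HI2 Hsz1 (x - Delta).
rewrite subnKC // in Hcase.
have Hg := Inv_g Hm2 HI.
have Hc := i_cost HI.
case: Hcase => [Hsz|[Hle Hfull]].
  have [p Hp Hps] := Phi_some (i_nu HI).
  rewrite Hsz in Hp Hg Hc; exists p => //.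
  have := leq_mul (leqnn r2) Hg; lia.
have [s1 [Hs1 Hnu1]] : exists s1, size s1 = rho.+1 /\ nuR G set0 s1.
  case: Hrho => p Hp Hpk.
  have [s' [Hs' Hnu' Hp']] := Phi_inv Hp.
  case: (set_0Vmem (~: unionS s')) => [H0|[a Ha]].
    have Hfull' : unionS s' = setT.
      apply/setP => z; rewrite in_setT.
      have : z \notin ~: unionS s' by rewrite H0 in_set0.
      by rewrite in_setC negbK.
    have := rank_bound Hnu' Hk; rewrite Hs'.
    move: Hp'; rewrite Hfull' cardsT card_ord => Hp'; lia.
  rewrite in_setC in Ha.
  have Ha0 : a \notin (set0 : {set 'I_n}) by rewrite in_set0.
  have [R HR] : exists R, regen G a R.
    case: (boolP (a \in T1)) => HaT.
      have [S [E [_ [_ HiE] _ HR _]]] := LG Hl1 Hd1 HaT Ha0.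
      by exists ((S :\: E) :|: [set a]); exact: HR.
    have HaT' : a \in ~: T1 by rewrite in_setC.
    have [S [E [_ [_ HiE] _ HR _]]] := LG Hl2 Hd2 HaT' Ha0.
    by exists ((S :\: E) :|: [set a]); exact: HR.
  exists (rcons s' (a, R)); split; first by rewrite size_rcons Hs'.
  by apply: nuR_rcons => //=; rewrite set0U.
have Hxs : x <= size s1 by rewrite Hs1.
have Hnut : nuR G set0 (take x s1).
  by apply: (nuR_cat (s2 := drop x s1)); rewrite cat_take_drop.
have [p Hp _] := Phi_some Hnut.
rewrite size_takel // in Hp.
exists p => //.
have Hpn := Phi_le Hp.
rewrite Hfull cardsT card_ord in Hc.
have Hg' := leq_trans Hg (ceiln_mono (delta2 - 1) (leq_sub2r Delta Hle)).
have := leq_mul (leqnn r2) Hg'; lia.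
Qed.
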